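(* Let $\mathbf d=\{d_i\}_{i\in\mathbb N}$ and $\boldsymbol\lambda=\{\lambda_i\}_{i\in\mathbb N}$ be nondecreasing real sequences such that \[ \delta_k:=\sum_{i=1}^k(d_i-\lambda_i)\ge0\ \text{ for all }k\in\mathbb N\qquad\text{and}\qquad\liminf_{k\to\infty}\delta_k=0 . \] Let $E$ be a symmetric operator on a dense domain $\mathcal D$ of a Hilbert space $\mathcal H$. Suppose that (i) there exists $N\in\mathbb N$ such that $\delta_N\le\delta_k$ for all $k\le N$, and (ii) there is an orthonormal sequence $\{g_i\}_{i\in\mathbb N}\subset\mathcal D$ with $\langle Eg_i,g_i\rangle=\tilde d_i$ for all $i$, where \[ \tilde d_i=\begin{cases}\lambda_1+\delta_N,& i=1,\\ \lambda_i,& i=2,\dots,N,\\ d_i,& i>N.\end{cases} \] Then there exists an orthonormal sequence $\{e_i\}_{i\in\mathbb N}$, each element of which lies in the (algebraic) linear span of $\{g_i\}_{i\in\mathbb N}$, such that $\overline{\operatorname{span}}\{e_i\}=\overline{\operatorname{span}}\{g_i\}$ and $\langle Ee_i,e_i\rangle=d_i$ for all $i\in\mathbb N$.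
   Context: $E$ symmetric means $\langle Ef,g\rangle=\langle f,Eg\rangle$ for all $f,g\in\mathcal D$. $\overline{\operatorname{span}}$ is the closed linear span. *)

(* Defs.v *)
From HB Require Import structures.
From mathcomp Require Import all_boot all_order all_algebra.
From mathcomp Require Import all_classical all_reals all_analysis.
From mathcomp.real_closed Require Import complex.
Set Implicit Arguments. Unset Strict Implicit. Unset Printing Implicit Defensive.
Import Order.TTheory GRing.Theory Num.Theory.
Local Open Scope ring_scope.
Local Open Scope classical_set_scope.

Definition cR (R : realType) (x : R) : R[i] := Complex x 0.

Definition inner_product_space (R : realType) (V : lmodType R[i])
  (ip : V -> V -> R[i]) : Prop :=
  [/\ (forall (a : R[i]) (x y z : V), ip (a *: x + y) z = a * ip x z + ip y z),
      (forall x y : V, ip y x = (ip x y)^*),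
      (forall x : V, 0 <= ip x x) &
      (forall x : V, ip x x = 0 -> x = 0)].

Definition hnorm (R : realType) (V : lmodType R[i]) (ip : V -> V -> R[i])
  (x : V) : R := Num.sqrt (complex.Re (ip x x)).

Definition hilbert_space (R : realType) (V : lmodType R[i])
  (ip : V -> V -> R[i]) : Prop :=
  inner_product_space ip /\
  forall u : nat -> V,
    (forall eps : R, 0 < eps -> exists M : nat, forall m n : nat,
        (M <= m)%N -> (M <= n)%N -> hnorm ip (u m - u n) < eps) ->
    exists l : V, forall eps : R, 0 < eps -> exists M : nat, forall n : nat,
        (M <= n)%N -> hnorm ip (u n - l) < eps.

Definition linear_subspace (R : realType) (V : lmodType R[i]) (D : set V) :=
  D 0 /\ forall (a : R[i]) (x y : V), D x -> D y -> D (a *: x + y).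

Definition dense_in (R : realType) (V : lmodType R[i]) (ip : V -> V -> R[i])
  (D : set V) :=
  forall (v : V) (eps : R), 0 < eps -> exists w, D w /\ hnorm ip (v - w) < eps.

(* E is a (linear) operator with domain D: only its values on D matter *)
Definition operator_on (R : realType) (V : lmodType R[i]) (D : set V)
  (E : V -> V) :=
  linear_subspace D /\
  forall (a : R[i]) (x y : V), D x -> D y -> E (a *: x + y) = a *: E x + E y.

Definition symmetric_on (R : realType) (V : lmodType R[i]) (ip : V -> V -> R[i])
  (D : set V) (E : V -> V) :=
  forall f g : V, D f -> D g -> ip (E f) g = ip f (E g).

Definition orthonormal_seq (R : realType) (V : lmodType R[i]) (ip : V -> V -> R[i])
  (g : nat -> V) :=
  forall i j : nat, ip (g i) (g j) = (i == j)%:R.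

Definition lspan (R : realType) (V : lmodType R[i]) (g : nat -> V) : set V :=
  [set v | exists (n : nat) (c : nat -> R[i]), v = \sum_(j < n) c j *: g j].

Definition clspan (R : realType) (V : lmodType R[i]) (ip : V -> V -> R[i])
  (g : nat -> V) : set V :=
  [set v | forall eps : R, 0 < eps ->
           exists w, lspan g w /\ hnorm ip (v - w) < eps].

(* Sequences are indexed from 0: d i here is d_{i+1} of the paper.
   delta d lam k = sum_{i=1}^k (d_i - lambda_i). *)
Definition delta (R : realType) (d lam : nat -> R) (k : nat) : R :=
  \sum_(i < k) (d i - lam i).

Definition dtilde (R : realType) (d lam : nat -> R) (N : nat) (i : nat) : R :=
  if i == 0%N then lam 0%N + delta d lam N
  else if (i < N)%N then lam i else d i.

(* Main.v *)
Require Import Defs.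
From HB Require Import structures.
From mathcomp Require Import all_boot all_order all_algebra.
From mathcomp Require Import all_classical all_reals all_analysis.
From mathcomp.real_closed Require Import complex.
From mathcomp Require Import ring lra.
Import Order.TTheory GRing.Theory Num.Theory.
Local Open Scope ring_scope.
Local Open Scope classical_set_scope.
From mathcomp Require Import zify.

Section Aux.
Variable R : realType.
Variable V : lmodType R[i].
Variable ip : V -> V -> R[i].
Hypothesis Hip : inner_product_space ip.

Lemma ipDl x y z : ip (x + y) z = ip x z + ip y z.
Proof. have [H _ _ _] := Hip. by rewrite -{1}[x]scale1r H mul1r. Qed.
Lemma ip0l z : ip 0 z = 0.
Proof. have := ipDl 0 0 z; rewrite addr0 -{1}[ip 0 z]addr0 => /addrI <-. done. Qed.
Lemma ipZl a x z : ip (a *: x) z = a * ip x z.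
Proof. have [H _ _ _] := Hip; by rewrite -[a *: x]addr0 H ip0l addr0. Qed.
Lemma ipC x y : ip y x = (ip x y)^*.
Proof. by have [_ H _ _] := Hip. Qed.
Lemma ipDr x y z : ip x (y + z) = ip x y + ip x z.
Proof. by rewrite ipC ipDl rmorphD [ip x y]ipC [ip x z]ipC. Qed.
Lemma ipZr a x y : ip x (a *: y) = a^* * ip x y.
Proof. by rewrite ipC ipZl rmorphM [ip x y]ipC. Qed.
Lemma ip0r z : ip z 0 = 0.
Proof. by rewrite ipC ip0l conjC0. Qed.

Lemma cRC (x : R) : (cR x)^* = cR x.
Proof. by apply: conj_Creal; rewrite /cR complex_real. Qed.
Lemma cRM (x y : R) : cR (x * y) = cR x * cR y.
Proof. exact: (rmorphM (real_complex R)). Qed.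
Lemma cRD (x y : R) : cR (x + y) = cR x + cR y.
Proof. exact: (rmorphD (real_complex R)). Qed.
Lemma cRB (x y : R) : cR (x - y) = cR x - cR y.
Proof. exact: (rmorphB (real_complex R)). Qed.
Lemma cR1 : cR (1 : R) = 1. Proof. by []. Qed.

Definition sp (u : nat -> V) (n : nat) : set V :=
  [set x | forall S : set V, linear_subspace S -> (forall i, (i < n)%N -> S (u i)) -> S x].

Lemma sp_sub u n : linear_subspace (sp u n).
Proof.
split; first by move=> S [] .
move=> a x y Hx Hy S HS Hu; apply: HS.2; [exact: Hx | exact: Hy].
Qed.
Lemma sp_gen u n i : (i < n)%N -> sp u n (u i).
Proof. by move=> Hi S _ Hu; exact: Hu. Qed.
Lemma sp_min {u n S x} : linear_subspace S -> (forall i, (i < n)%N -> S (u i)) -> sp u n x -> S x.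
Proof. by move=> HS Hu Hx; exact: Hx. Qed.
Lemma sp_mono {u n m x} : (n <= m)%N -> sp u n x -> sp u m x.
Proof.
move=> Hnm Hx; apply: (sp_min (sp_sub u m)) Hx => i Hi; apply: sp_gen.
exact: leq_trans Hi Hnm.
Qed.

Lemma sub0 (S : set V) : linear_subspace S -> S 0. Proof. by case. Qed.
Lemma subD (S : set V) x y : linear_subspace S -> S x -> S y -> S (x + y).
Proof. by move=> [_ H] Hx Hy; rewrite -[x]scale1r; apply: H. Qed.
Lemma subZ (S : set V) a x : linear_subspace S -> S x -> S (a *: x).
Proof. by move=> HS Hx; rewrite -[_ *: _]addr0; apply: HS.2 => //; apply: sub0. Qed.

Lemma sum_in (S : set V) n (c : nat -> R[i]) (f : nat -> V) :
  linear_subspace S -> (forall j, (j < n)%N -> S (f j)) ->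
  S (\sum_(j < n) c j *: f j).
Proof.
move=> HS; elim: n => [|n IH] Hf; first by rewrite big_ord0; apply: sub0.
rewrite big_ord_recr /= addrC; apply: HS.2; first exact: Hf.
by apply: IH => j Hj; apply: Hf; apply: ltnW.
Qed.

Definition fsp (g : nat -> V) n : set V :=
  [set v | exists c : nat -> R[i], v = \sum_(j < n) c j *: g j].

Lemma fsp_sub g n : linear_subspace (fsp g n).
Proof.
split.
  by exists (fun=> 0); rewrite big1 // => j _; rewrite scale0r.
move=> a x y [c ->] [c' ->]; exists (fun j => a * c j + c' j).
rewrite scaler_sumr -big_split; apply: eq_bigr => j _.
by rewrite scalerA scalerDl.
Qed.

Lemma fsp_gen g n i : (i < n)%N -> fsp g n (g i).
Proof.
move=> Hi; exists (fun j => (j == i)%:R).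
rewrite (bigD1 (Ordinal Hi)) //= eqxx scale1r big1 ?addr0 // => k.
by rewrite -val_eqE /= => /negbTE ->; rewrite scale0r.
Qed.

Lemma sp_lspan {g n x} : sp g n x -> lspan g x.
Proof.
move=> Hx; have : fsp g n x.
  by apply: (sp_min (fsp_sub g n)) Hx => i Hi; apply: fsp_gen.
by move=> [c ->]; exists n, c.
Qed.

Lemma lspan_sp g x : lspan g x -> exists n, sp g n x.
Proof.
move=> [n [c ->]]; exists n; apply: sum_in; first exact: sp_sub.
by move=> j Hj; apply: sp_gen.
Qed.

Lemma lspan_sub (g : nat -> V) : linear_subspace (lspan g).
Proof.
split; first by apply: (@sp_lspan g 0); apply: sub0; apply: sp_sub.
move=> a x y /lspan_sp [n Hx] /lspan_sp [m Hy].
apply: (@sp_lspan g (n + m)); apply: (sp_sub g (n+m)).2.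
  exact: sp_mono (leq_addr _ _) Hx.
exact: sp_mono (leq_addl _ _) Hy.
Qed.

Lemma orth_sub w : linear_subspace [set x | ip x w = 0].
Proof.
split => /=; first exact: ip0l.
by move=> a x y Hx Hy; rewrite ipDl ipZl Hx Hy mulr0 addr0.
Qed.

End Aux.
Arguments ipDl {R V ip} Hip x y z.
Arguments ip0l {R V ip} Hip z.
Arguments ipZl {R V ip} Hip a x z.
Arguments ipC {R V ip} Hip x y.
Arguments ipDr {R V ip} Hip x y z.
Arguments ipZr {R V ip} Hip a x y.
Arguments ip0r {R V ip} Hip z.
Arguments cRC {R} x.
Arguments cRM {R} x y.
Arguments cRD {R} x y.
Arguments cRB {R} x y.
Arguments sp {R V} u n.
Arguments sp_sub {R V} u n.
Arguments sp_gen {R V} u n i.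
Arguments sp_min {R V u n S x}.
Arguments sp_mono {R V u n m x}.
Arguments sub0 {R V} S.
Arguments subD {R V} S x y.
Arguments subZ {R V} S a x.
Arguments sum_in {R V} S n c f.
Arguments sp_lspan {R V g n x}.
Arguments lspan_sp {R V} g x.
Arguments lspan_sub {R V} g.
Arguments orth_sub {R V ip} Hip w.

Lemma phase {R : realType} (g : R[i]) : exists z : R[i], z * z^* = 1 /\ z^* * g + z * g^* = 0.
Proof.
have [->|g0] := eqVneq g 0.
  by exists 1; rewrite conjC1 conjC0 !mulr0 mulr1 addr0.
have r0 : `|g| != 0 by rewrite normr_eq0.
have rr : `|g|^* = `|g| by apply: conj_Creal; apply: normr_real.
exists ('i * g / `|g|); split.
  rewrite !rmorphM /= conjCi fmorphV /= rr.
  have -> : 'i * g / `|g| * (- 'i * g^* / `|g|) = - ('i ^+ 2) * (g * g^*) / (`|g| ^+ 2).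
    by rewrite expr2 invfM; ring.
  by rewrite sqrCi -normCK opprK mul1r divff // expf_neq0.
rewrite !rmorphM /= conjCi fmorphV /= rr; ring.
Qed.

Lemma vcomb {R : realType} {V : lmodType R[i]} (u v : V) (x y p1 q1 p2 q2 : R[i]) :
  x *: (p1 *: u + q1 *: v) + y *: (p2 *: u + q2 *: v) =
  (x * p1 + y * p2) *: u + (x * q1 + y * q2) *: v.
Proof. by rewrite !scalerDr !scalerA !scalerDl addrACA. Qed.

Section Rot.
Variable R : realType.
Variable V : lmodType R[i].
Variable ip : V -> V -> R[i].
Hypothesis Hip : inner_product_space ip.
Variable D : set V.
Variable E : V -> V.
Hypothesis HD : operator_on D E.
Hypothesis HS : symmetric_on ip D E.

Lemma E0 : E 0 = 0.
Proof.
have [[D0 _] HE] := HD.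
have := HE 1 0 0 D0 D0; rewrite !scale1r !addr0.
by rewrite -{1}[E 0]addr0 => /addrI <-.
Qed.

Lemma EZ a x : D x -> E (a *: x) = a *: E x.
Proof.
have [[D0 _] HE] := HD => Dx.
by rewrite -[a *: x]addr0 HE // E0 addr0.
Qed.

Lemma ED x y : D x -> D y -> E (x + y) = E x + E y.
Proof.
have [_ HE] := HD => Dx Dy.
by rewrite -{1}[x]scale1r HE // scale1r.
Qed.

Lemma rot u v (al be t : R) : D u -> D v -> ip u u = 1 -> ip v v = 1 -> ip u v = 0 ->
  ip (E u) u = cR al -> ip (E v) v = cR be -> al <= t -> t <= be ->
  exists w w',
   [/\ (forall S, linear_subspace S -> S u -> S v -> S w /\ S w'),
       (forall S, linear_subspace S -> S w -> S w' -> S u /\ S v),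
       (forall x, ip x u = 0 -> ip x v = 0 -> ip x w = 0 /\ ip x w' = 0),
       [/\ ip w w = 1, ip w' w' = 1 & ip w w' = 0] &
       ip (E w) w = cR t /\ ip (E w') w' = cR (al + be - t)].
Proof.
move=> Du Dv uu vv uv Eu Ev alt tbe.
have vu : ip v u = 0 by rewrite (ipC Hip) uv conjC0.
set gm := ip (E u) v.
have Evu : ip (E v) u = gm^* by rewrite HS // (ipC Hip).
have [z [zz zg]] := phase gm.
pose p := (be - t) / (be - al).
have [p0 p1] : 0 <= p /\ p <= 1.
  have [eab|nab] := eqVneq be al.
    by rewrite /p eab subrr invr0 mulr0 lexx ler01.
  have hp : 0 < be - al.
    by rewrite subr_gt0 lt_neqAle eq_sym nab /= (le_trans alt tbe).
  split; first by apply: divr_ge0; [rewrite subr_ge0 | exact: ltW].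
  by rewrite /p ler_pdivrMr // mul1r; lra.
have hval : p * al + (1 - p) * be = t.
  have [eab|nab] := eqVneq be al.
    rewrite /p eab subrr invr0 mulr0 mul0r add0r subr0 mul1r.
    by rewrite eab in tbe; lra.
  have hp : be - al != 0 by rewrite subr_eq0.
  rewrite /p; field; exact: hp.
pose c := Num.sqrt p; pose s := Num.sqrt (1 - p).
have cc : c * c = p by rewrite -expr2 sqr_sqrtr.
have ss : s * s = 1 - p by rewrite -expr2 sqr_sqrtr // subr_ge0.
set C := cR c; set S' := cR s.
have CC : C^* = C by apply: cRC.
have SC : S'^* = S' by apply: cRC.
have H1 : C * C + S' * S' = 1 by rewrite -!cRM -cRD cc ss addrC subrK.
have H3 : C * C * cR al + S' * S' * cR be = cR t by rewrite -!cRM -cRD cc ss hval.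
have H4 : S' * S' * cR al + C * C * cR be = cR (al + be - t).
  by rewrite -!cRM -cRD cc ss -hval; congr cR; ring.
have Dw : forall a b, D (a *: u + b *: v) by move=> a b; apply: HD.1.2 => //; apply: subZ HD.1 Dv.
exists (C *: u + (S' * z) *: v), ((- S') *: u + (C * z) *: v); split.
- move=> S HS0 Su Sv; split; apply: HS0.2 => //; exact: subZ.
- move=> S HS0 Sw Sw'; split.
    have -> : u = C *: (C *: u + (S' * z) *: v) + (- S') *: ((- S') *: u + (C * z) *: v).
      rewrite vcomb.
      have -> : C * C + - S' * - S' = 1 by rewrite mulrNN.
      have -> : C * (S' * z) + - S' * (C * z) = 0 by ring.
      by rewrite scale1r scale0r addr0.
    by apply: HS0.2 => //; exact: subZ.
  have -> : v = (z^* * S') *: (C *: u + (S' * z) *: v) + (z^* * C) *: ((- S') *: u + (C * z) *: v).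
    rewrite vcomb.
    have -> : z^* * S' * C + z^* * C * - S' = 0 by ring.
    have -> : z^* * S' * (S' * z) + z^* * C * (C * z) = 1.
      by transitivity ((C * C + S' * S') * (z * z^*)); [ring | rewrite H1 zz mulr1].
    by rewrite scale1r scale0r add0r.
  by apply: HS0.2 => //; exact: subZ.
- move=> x xu xv; rewrite !(ipDr Hip) !(ipZr Hip) xu xv.
  by rewrite !mulr0 addr0.
- split.
  + rewrite !(ipDl Hip) !(ipZl Hip) !(ipDr Hip) !(ipZr Hip) uu vv uv vu !rmorphM /= CC SC.
    apply/eqP; rewrite -subr_eq0; apply/eqP.
    transitivity ((C * C + S' * S' - 1) + S' * S' * (z * z^* - 1)); first ring.
    by rewrite H1 zz !subrr mulr0 addr0.
  + rewrite !(ipDl Hip) !(ipZl Hip) !(ipDr Hip) !(ipZr Hip) uu vv uv vu !rmorphM /= ?CC ?SC ?rmorphN /= ?CC ?SC.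
    apply/eqP; rewrite -subr_eq0; apply/eqP.
    transitivity ((C * C + S' * S' - 1) + C * C * (z * z^* - 1)); first ring.
    by rewrite H1 zz !subrr mulr0 addr0.
  + rewrite !(ipDl Hip) !(ipZl Hip) !(ipDr Hip) !(ipZr Hip) uu vv uv vu !rmorphM /= ?CC ?SC ?rmorphN /= ?CC ?SC.
    transitivity (C * S' * (z * z^* - 1)); first ring.
    by rewrite zz subrr mulr0.
- have EL : forall a b, E (a *: u + b *: v) = a *: E u + b *: E v.
    by move=> a b; rewrite ED ?EZ //; exact: (subZ D _ _ HD.1).
  rewrite !EL.
  split.
  + rewrite !(ipDl Hip) !(ipZl Hip) !(ipDr Hip) !(ipZr Hip) Eu Ev Evu -/gm !rmorphM /= CC SC.
    apply/eqP; rewrite -subr_eq0; apply/eqP.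
    transitivity (C * S' * (z^* * gm + z * gm^*) + S' * S' * cR be * (z * z^* - 1)
       + (C * C * cR al + S' * S' * cR be - cR t)); first ring.
    by rewrite zg H3 zz !subrr !mulr0 !addr0.
  + rewrite !(ipDl Hip) !(ipZl Hip) !(ipDr Hip) !(ipZr Hip) Eu Ev Evu -/gm !rmorphM /= ?CC ?SC ?rmorphN /= ?CC ?SC.
    apply/eqP; rewrite -subr_eq0; apply/eqP.
    transitivity (- (C * S' * (z^* * gm + z * gm^*)) + C * C * cR be * (z * z^* - 1)
       + (S' * S' * cR al + C * C * cR be - cR (al + be - t))); first ring.
    by rewrite zg H4 zz !subrr !mulr0 oppr0 !addr0.
Qed.

End Rot.

Definition ncons {T : Type} (w : T) (f : nat -> T) (k : nat) : T :=
  if k is k'.+1 then f k' else w.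

Lemma sum_recl {R : realType} (F : nat -> R) k :
  \sum_(i < k.+1) F i = F 0%N + \sum_(i < k) F i.+1.
Proof. by rewrite big_ord_recl; congr (_ + _); apply: eq_bigr => i _; rewrite lift0. Qed.

Lemma sumif {R : realType} (j : nat) (x : R) k : (0 < j)%N ->
  \sum_(i < k) (if i.+1 == j then x else 0) = if (j <= k)%N then x else 0.
Proof.
move=> j0; elim: k => [|k IH]; first by rewrite big_ord0; case: ifP => //; lia.
rewrite big_ord_recr /= IH.
have [jk|jk] := leqP j k.
  have -> : (k.+1 == j) = false by apply/negbTE; lia.
  have -> : (j <= k.+1)%N by lia.
  by rewrite addr0.
have [e|ne] := eqVneq k.+1 j.
  by rewrite -e leqnn add0r.
have -> : (j <= k.+1)%N = false by lia.
by rewrite addr0.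
Qed.

Section Fin.
Variable R : realType.
Variable V : lmodType R[i].
Variable ip : V -> V -> R[i].
Hypothesis Hip : inner_product_space ip.
Variable D : set V.
Variable E : V -> V.
Hypothesis HD : operator_on D E.
Hypothesis HS : symmetric_on ip D E.

Definition hyps n (u : nat -> V) (a b : nat -> R) :=
 [/\ forall i, (i < n)%N -> D (u i),
     forall i j, (i < n)%N -> (j < n)%N -> ip (u i) (u j) = (i == j)%:R,
     forall i, (i < n)%N -> ip (E (u i)) (u i) = cR (a i),
     forall i j, (i <= j)%N -> (j < n)%N -> b i <= b j &
     (forall k, (k <= n)%N -> \sum_(i < k) a i <= \sum_(i < k) b i) /\
       \sum_(i < n) a i = \sum_(i < n) b i].

Definition concl n (u : nat -> V) (b : nat -> R) :=
  exists e : nat -> V,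
   [/\ forall i, (i < n)%N -> sp u n (e i),
       forall i, (i < n)%N -> sp e n (u i),
       forall i j, (i < n)%N -> (j < n)%N -> ip (e i) (e j) = (i == j)%:R &
       forall i, (i < n)%N -> ip (E (e i)) (e i) = cR (b i)].

Lemma fin_step n (IH : forall u a b, hyps n u a b -> concl n u b)
  (u : nat -> V) (b : nat -> R) (w : V) (u' : nat -> V) (a' : nat -> R) :
  sp u n.+1 w ->
  (forall i, (i < n)%N -> sp u n.+1 (u' i)) ->
  (forall i, (i < n.+1)%N -> sp (ncons w u') n.+1 (u i)) ->
  ip w w = 1 -> ip (E w) w = cR (b 0%N) ->
  (forall i, (i < n)%N -> ip (u' i) w = 0) ->
  hyps n u' a' (fun i => b i.+1) ->
  concl n.+1 u b.
Proof.
move=> H1 H2 H3 ww Ew H5 H6.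
have [e' [He1 He2 He3 He4]] := IH _ _ _ H6.
have orth : forall i, (i < n)%N -> ip (e' i) w = 0.
  by move=> i Hi; apply: (sp_min (orth_sub Hip w) H5 (He1 i Hi)).
exists (ncons w e'); split.
- case=> [|k] Hk //=.
  exact: (sp_min (sp_sub u n.+1) H2 (He1 k Hk)).
- move=> i Hi; apply: (sp_min (sp_sub _ n.+1) _ (H3 i Hi)).
  case=> [|k] Hk; first exact: (sp_gen (ncons w e') n.+1 0%N Hk).
  apply: (sp_min (sp_sub _ n.+1) _ (He2 k Hk)) => l Hl.
  exact: (sp_gen (ncons w e') n.+1 l.+1 Hl).
- case=> [|i] [|j] Hi Hj //=.
  + by rewrite (ipC Hip) orth // conjC0.
  + exact: orth.
  + exact: He3.
- by case=> [|i] Hi //=; apply: He4.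
Qed.


Lemma fin n : forall u a b, hyps n u a b -> concl n u b.
Proof.
elim: n => [|n IH] u a b [Hu Hon Ha Hb [Hpre Hsum]].
  by exists u; split.
have a0b0 : a 0%N <= b 0%N.
  by have := Hpre 1%N isT; rewrite !big_ord1.
have Hex : exists j, (j <= n)%N && (b 0%N <= a j).
  apply/not_existsP => Hne; move: Hsum; apply/eqP; rewrite lt_eqF //.
  have Hlt : forall j, (j <= n)%N -> a j < b 0%N.
    move=> j Hj; rewrite ltNge; apply/negP => Hba; apply: (Hne j).
    by rewrite Hj Hba.
  rewrite !sum_recl; apply: ltr_leD; first exact: Hlt.
  apply: ler_sum => i _; apply: le_trans (ltW (Hlt _ (ltn_ord i))) _.
  by apply: Hb => //; rewrite ltnS.
case: (ex_minnP Hex) => j /andP [jn bj] jmin.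
have Hlj : forall i, (i < j)%N -> a i < b 0%N.
  move=> i Hi; rewrite ltNge; apply/negP => Hba.
  have := jmin i; rewrite Hba andbT (leq_trans (ltnW Hi) jn) => /(_ isT).
  by rewrite leqNgt Hi.
have b0le : forall i, (i < n.+1)%N -> b 0%N <= b i by move=> i Hi; apply: Hb.
have [j0|jpos] := posnP j.
  rewrite j0 in bj.
  have ab : a 0%N = b 0%N by apply/eqP; rewrite eq_le a0b0 bj.
  apply: (@fin_step n IH u b (u 0%N) (fun i => u i.+1) (fun i => a i.+1)).
  - exact: sp_gen.
  - by move=> i Hi; apply: sp_gen.
  - have -> : ncons (u 0%N) (fun i => u i.+1) = u by apply: funext => -[|k].
    by move=> i Hi; apply: sp_gen.
  - exact: Hon.
  - by rewrite Ha // ab.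
  - by move=> i Hi; rewrite Hon.
  - split => //.
    + by move=> i Hi; apply: Hu.
    + by move=> i k Hi Hk; rewrite Hon.
    + by move=> i Hi; rewrite Ha.
    + by move=> i k Hik Hk; apply: Hb.
    + split.
        move=> k Hk; have := Hpre k.+1 Hk; rewrite !sum_recl ab.
        by rewrite lerD2l.
      by move: Hsum; rewrite !sum_recl ab => /addrI.
have u0j : ip (u 0%N) (u j) = 0.
  by rewrite Hon // eq_sym; move: jpos; rewrite lt0n => /negbTE ->.
have ujj : ip (u j) (u j) = 1 by rewrite Hon // eqxx.
have [w [w' [fwd bwd orth [ww w'w' ww'] [Ew Ew']]]] :=
  @rot _ _ _ Hip _ _ HD HS (u 0%N) (u j) (a 0%N) (a j) (b 0%N) (Hu 0%N isT) (Hu j jn) (Hon 0%N 0%N isT isT) ujj u0j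
      (Ha 0%N isT) (Ha j jn) a0b0 bj.
have w'w : ip w' w = 0 by rewrite (ipC Hip) ww' conjC0.
pose u' := fun i => if i.+1 == j then w' else u i.+1.
pose a' := fun i => a i.+1 + (if i.+1 == j then a 0%N - b 0%N else 0).
have Hspu := sp_sub u n.+1.
have [fw fw'] := fwd _ Hspu (sp_gen u n.+1 0%N isT) (sp_gen u n.+1 j jn).
have H2 : forall i, (i < n)%N -> sp u n.+1 (u' i).
  by move=> i Hi; rewrite /u'; case: ifP => _ //; apply: sp_gen.
have orthu : forall k, (k < n.+1)%N -> k != 0%N -> k != j ->
    ip (u k) w = 0 /\ ip (u k) w' = 0.
  move=> k Hk k0 kj; apply: orth.
    by rewrite Hon // (negbTE k0).
  by rewrite Hon // (negbTE kj).
have sumA : forall k, \sum_(i < k) a' i = \sum_(i < k) a i.+1 + (if (j <= k)%N then a 0%N - b 0%N else 0).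
  by move=> k; rewrite big_split /= sumif.
have key : forall k, (j <= k)%N -> (k <= n)%N -> \sum_(i < k) a' i = \sum_(i < k.+1) a i - b 0%N.
  move=> k jk kn; rewrite sumA jk sum_recl; ring.
apply: (@fin_step n IH u b w u' a') => //.
- move=> i Hi.
  set T := sp (ncons w u') n.+1.
  have Tw : T w by exact: (sp_gen (ncons w u') n.+1 0%N isT).
  have Tw' : T w'.
    have ej : j = j.-1.+1 by rewrite prednK.
    by have := sp_gen (ncons w u') n.+1 j jn; rewrite ej /= /u' -ej eqxx.
  have [Tu0 Tuj] := bwd T (sp_sub _ n.+1) Tw Tw'.
  case: i Hi => [|k] Hk //.
  have [e|ne] := eqVneq k.+1 j; first by rewrite e.
  have := sp_gen (ncons w u') n.+1 k.+1 Hk; rewrite /= /u' (negbTE ne).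
  done.
- move=> i Hi; rewrite /u'; case: ifP => [_ | /negbT ne] //.
  by case: (orthu i.+1 Hi isT ne).
- split.
  + move=> i Hi; apply: (sp_min HD.1 Hu (H2 i Hi)).
  + move=> i k Hi Hk; rewrite /u'.
    case: ifP => [/eqP ei | /negbT ni]; case: ifP => [/eqP ek | /negbT nk].
    * have -> : i = k by apply/eqP; rewrite -eqSS ei ek.
      by rewrite eqxx.
    * have -> : (i == k) = false by apply/negbTE; apply: contra nk => /eqP <-; rewrite ei.
      by rewrite (ipC Hip) (orthu k.+1 Hk isT nk).2 conjC0.
    * have -> : (i == k) = false by apply/negbTE; apply: contra ni => /eqP ->; rewrite ek.
      by rewrite (orthu i.+1 Hi isT ni).2.
    * by rewrite Hon.
  + move=> i Hi; rewrite /u' /a'; case: ifP => [/eqP ei | _].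
      by rewrite Ew' ei; congr cR; ring.
    by rewrite addr0 Ha.
  + by move=> i k Hik Hk; apply: Hb.
  + split.
      move=> k Hk; have [jk|kj] := leqP j k.
        rewrite key //; have := Hpre k.+1 Hk; rewrite [in X in _ <= X -> _]sum_recl.
        move=> H; rewrite lerBlDl; exact: H.
      rewrite sumA leqNgt kj addr0; apply: ler_sum => i _.
      apply: le_trans (b0le i.+1 _); last by rewrite ltnS; apply: leq_trans Hk.
      apply: ltW; apply: Hlj; apply: leq_trans kj; exact: ltn_ord.
    by rewrite key // Hsum sum_recl addrC addKr.
Qed.

End Fin.

Theorem lemma3p5 (R : realType) (d lam : nat -> R)
  (V : lmodType R[i]) (ip : V -> V -> R[i]) (D : set V) (E : V -> V)
  (N : nat) (g : nat -> V) :
  nondecreasing_seq d -> nondecreasing_seq lam ->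
  (forall k : nat, (1 <= k)%N -> 0 <= delta d lam k) ->
  limn_einf (fun k => (delta d lam k)%:E) = 0%E ->
  hilbert_space ip -> operator_on D E -> dense_in ip D -> symmetric_on ip D E ->
  (1 <= N)%N -> (forall k : nat, (1 <= k <= N)%N -> delta d lam N <= delta d lam k) ->
  orthonormal_seq ip g -> (forall i : nat, D (g i)) ->
  (forall i : nat, ip (E (g i)) (g i) = cR (dtilde d lam N i)) ->
  exists e : nat -> V,
    [/\ orthonormal_seq ip e,
        (forall i : nat, lspan g (e i)),
        clspan ip e = clspan ip g &
        (forall i : nat, ip (E (e i)) (e i) = cR (d i))].
Proof.
move=> ndd ndl _ _ hil HD _ HS N1 hN on Dg Eg.
have Hip := hil.1.
pose a := dtilde d lam N.
have Hsumdt : forall k, (1 <= k <= N)%N ->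
    \sum_(i < k) a i = \sum_(i < k) lam i + delta d lam N.
  case=> [|k] // /andP [_ kN]; rewrite !sum_recl /a /dtilde /=.
  rewrite (eq_bigr (fun i : 'I_k => lam i.+1)); first ring.
  move=> i _; have -> : (i.+1 < N)%N by apply: leq_trans kN; rewrite ltnS ltn_ord.
  done.
have Hsumd : forall k, \sum_(i < k) d i = \sum_(i < k) lam i + delta d lam k.
  by move=> k; rewrite /delta sumrB addrC subrK.
have H : @hyps R V ip D E N g a d.
  split.
  - by move=> i _; apply: Dg.
  - by move=> i j _ _; apply: on.
  - by move=> i _; apply: Eg.
  - by move=> i j Hij _; apply: ndd.
  - split.
      case=> [|k] Hk; first by rewrite !big_ord0.
      by rewrite Hsumdt ?Hk // Hsumd lerD2l hN ?Hk.
    by rewrite Hsumdt ?N1 ?leqnn // Hsumd.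
have [e0 [He1 He2 He3 He4]] := @fin R V ip Hip D E HD HS N g a d H.
pose e := fun i => if (i < N)%N then e0 i else g i.
have orthN : forall x j, (N <= j)%N -> sp g N x -> ip x (g j) = 0.
  move=> x j Hj Hx; apply: (sp_min (orth_sub Hip (g j)) _ Hx) => k Hk /=.
  rewrite on; have -> : (k == j) = false by apply/negbTE; lia.
  done.
have eg : forall i, lspan g (e i).
  move=> i; rewrite /e; case: ifP => Hi; first exact: sp_lspan (He1 i Hi).
  exact: sp_lspan (sp_gen g i.+1 i (ltnSn i)).
have ee : forall i, lspan e (e i) by move=> i; exact: sp_lspan (sp_gen e i.+1 i (ltnSn i)).
have ge : forall i, lspan e (g i).
  move=> i; case: (ltnP i N) => Hi.
    apply: (sp_min (lspan_sub e) _ (He2 i Hi)) => k Hk.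
    by have := ee k; rewrite /e Hk.
  by have := ee i; rewrite /e ltnNge Hi.
have Hl : lspan e = lspan g.
  apply/seteqP; split => x [n [c ->]].
    by apply: sum_in (lspan_sub g) _ => j _; apply: eg.
  by apply: sum_in (lspan_sub e) _ => j _; apply: ge.
exists e; split => //.
- move=> i j; rewrite /e; case: ifP => Hi; case: ifP => Hj.
  + exact: He3.
  + have {}Hj : (N <= j)%N by rewrite leqNgt Hj.
    rewrite (orthN _ _ Hj (He1 i Hi)).
    by have -> : (i == j) = false by apply/negbTE; lia.
  + have {}Hi : (N <= i)%N by rewrite leqNgt Hi.
    rewrite (ipC Hip) (orthN _ _ Hi (He1 j Hj)) conjC0.
    by have -> : (i == j) = false by apply/negbTE; lia.
  + exact: on.
- by rewrite /clspan Hl.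
- move=> i; rewrite /e; case: ifP => Hi; first exact: He4.
  rewrite Eg /dtilde Hi; have -> : (i == 0%N) = false by apply/negbTE; lia.
  done.
Qed.
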